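(* Let $H$ be an RB function for $\mathcal X_r$, $\eta\ge\max_{p\in\mathcal Q}H(\mathbf f[p])$, $\epsilon>0$, and let $\mathcal V(\vec a,\vec x,\epsilon)$ be a $1-\epsilon$ confidence region for $\frac1n\sum_{j=1}^n\mathbf f[p_{\vec a_{j-1},\vec x_{j-1}}]$, with associated set $V$. Then for every $(\vec a,\vec x)\in V$, $$-\log_2P(\vec a\mid\vec x)\ge nH(\mathcal V(\vec a,\vec x,\epsilon))-\nu(\vec x)\eta .$$
   Context: Setting. A Bell device consists of $k$ boxes; box $i$ takes inputs in a finite set $\mathcal X_i$ and produces outputs in a finite set $\mathcal A_i$; $\mathcal X=\prod_i\mathcal X_i$, $\mathcal A=\prod_i\mathcal A_i$. A single-round behavior is $p=(p(a\mid x))_{a\in\mathcal A,x\in\mathcal X}$; $\mathcal Q$ is the set of quantum behaviors (those realizable by a $k$-partite quantum state and local measurements on each box). A Bell expression is $f\in\mathbb R^{|\mathcal A|\times|\mathcal X|}$ with $f[p]=\sum_{a,x}f(a,x)p(a\mid x)$; fix $\mathbf f=(f_1,\dots,f_t)$, $\mathbf f[p]=(f_1[p],\dots,f_t[p])$, $\mathbf f[\mathcal Q]=\{\mathbf f[p]:p\in\mathcal Q\}$. $n$-round model. $\vec x\in\mathcal X^n$, $\vec a\in\mathcal A^n$, prefixes $\vec x_j,\vec a_j$ (empty for $j=0$). An $n$-round device behavior is $P(\vec a\mid\vec x)=\prod_{j=1}^n p_{\vec a_{j-1},\vec x_{j-1}}(a_j\mid x_j)$ with every $p_{\vec a_{j-1},\vec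 x_{j-1}}\in\mathcal Q$. Inputs are drawn according to $\Pi(\vec x)=\prod_j\pi(x_j)$ for a probability distribution $\pi$ on $\mathcal X$, and $P(\vec a,\vec x)=P(\vec a\mid\vec x)\Pi(\vec x)$ defines the joint distribution $P_{AX}$. RB function. For a nonempty $\mathcal X_r\subseteq\mathcal X$, $H:\mathbf f[\mathcal Q]\to[0,\log_2|\mathcal A|]$ is RB if (1) $\min_{a\in\mathcal A,x\in\mathcal X_r}(-\log_2p(a\mid x))\ge H(\mathbf f[p])$ for all $p\in\mathcal Q$ and (2) $H(q\mathbf f[p_1]+(1-q)\mathbf f[p_2])\le qH(\mathbf f[p_1])+(1-q)H(\mathbf f[p_2])$ for $q\in[0,1]$, $p_1,p_2\in\mathcal Q$. For a set $\mathcal V\subseteq\mathbb R^t$, $H(\mathcal V)$ denotes a fixed number satisfying $H(\mathcal V)\le\inf\{H(\mathbf y):\mathbf y\in\mathbf f[\mathcal Q]\cap\mathcal V\}$, and $H(\mathcal V)=0$ if $\mathbf f[\mathcal Q]\cap\mathcal V=\emptyset$. $\nu(\vec x)$ is the number of $j$ with $x_j\notin\mathcal X_r$. Confidence region. A $1-\epsilon$ confidence region is an assignment $(\vec a,\vec x)\mapsto\mathcal V(\vec a,\vec x,\epsilon)\subseteq\mathbb R^t$ such that for every $n$-round device behavior, $\Pr_{P_{AX}}\big[\frac1n\sum_{j=1}^n\mathbf f[p_{\vec a_{j-1},\vec x_{j-1}}]\in\mathcal V(\vec a,\vec x,\epsilon)\big]\ge1-\epsilon$. The associated set is $V=\{(\vec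 a,\vec x):\frac1n\sum_{j=1}^n\mathbf f[p_{\vec a_{j-1},\vec x_{j-1}}]\in\mathcal V(\vec a,\vec x,\epsilon)\}$. *)

(* Defs.v *)
From mathcomp Require Import all_boot.
From Stdlib Require Import Reals ClassicalEpsilon.
Set Implicit Arguments. Unset Strict Implicit. Unset Printing Implicit Defensive.

Local Open Scope R_scope.

Definition sumR {T : finType} (F : T -> R) : R := \big[Rplus/0]_(i : T) F i.
Definition prodR {T : finType} (F : T -> R) : R := \big[Rmult/1]_(i : T) F i.

Definition mlog2 (y : R) : R := - (ln y / ln 2).

Definition ind (P : Prop) : R :=
  if excluded_middle_informative P then 1 else 0.

Section Bell.
Variables (A X : finType) (t : nat).

Definition behavior := A -> X -> R.

Definition is_behavior (p : behavior) : Prop :=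
  (forall a x, 0 <= p a x) /\ (forall x, sumR (fun a => p a x) = 1).

Definition fvec (f : 'I_t -> A -> X -> R) (p : behavior) : 'I_t -> R :=
  fun i => sumR (fun a => sumR (fun x => f i a x * p a x)).

Definition convex_set (Q : behavior -> Prop) : Prop :=
  forall p1 p2 q, Q p1 -> Q p2 -> 0 <= q <= 1 ->
    Q (fun a x => q * p1 a x + (1 - q) * p2 a x).

(* RB function H for X_r (H given as a total function on R^t; only its
   values on f[Q] matter) *)
Definition RB (Q : behavior -> Prop) (f : 'I_t -> A -> X -> R)
    (Xr : pred X) (H : ('I_t -> R) -> R) : Prop :=
  (forall p, Q p -> 0 <= H (fvec f p) <= ln (INR #|A|) / ln 2) /\
  (forall p, Q p -> forall a x, Xr x -> 0 < p a x -> H (fvec f p) <= mlog2 (p a x)) /\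
  (forall q p1 p2, 0 <= q <= 1 -> Q p1 -> Q p2 ->
     H (fun i => q * fvec f p1 i + (1 - q) * fvec f p2 i)
       <= q * H (fvec f p1) + (1 - q) * H (fvec f p2)).

Definition HV_spec (Q : behavior -> Prop) (f : 'I_t -> A -> X -> R)
    (H : ('I_t -> R) -> R) (HV : (('I_t -> R) -> Prop) -> R) : Prop :=
  (forall V p, Q p -> V (fvec f p) -> HV V <= H (fvec f p)) /\
  (forall V, (forall p, Q p -> ~ V (fvec f p)) -> HV V = 0).

Variable n : nat.

(* n-round device: the behavior used in round j (0-based) is
   dev (a_1..a_j) (x_1..x_j), i.e. it depends on the prefixes *)
Definition device := seq A -> seq X -> behavior.

Definition is_device (Q : behavior -> Prop) (dev : device) : Prop :=
  forall sa sx, Q (dev sa sx).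

Definition Pcond (dev : device) (av : n.-tuple A) (xv : n.-tuple X) : R :=
  prodR (fun j : 'I_n => dev (take j av) (take j xv) (tnth av j) (tnth xv j)).

Definition Pin (pi : X -> R) (xv : n.-tuple X) : R :=
  prodR (fun j : 'I_n => pi (tnth xv j)).

Definition Pjoint (dev : device) (pi : X -> R) av xv : R :=
  Pcond dev av xv * Pin pi xv.

Definition favg (f : 'I_t -> A -> X -> R) (dev : device)
    (av : n.-tuple A) (xv : n.-tuple X) : 'I_t -> R :=
  fun i => / INR n * sumR (fun j : 'I_n => fvec f (dev (take j av) (take j xv)) i).

Definition Prob (dev : device) (pi : X -> R)
    (E : n.-tuple A -> n.-tuple X -> Prop) : R :=
  sumR (fun av : n.-tuple A => sumR (fun xv : n.-tuple X =>
    ind (E av xv) * Pjoint dev pi av xv)).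

Definition confidence_region (Q : behavior -> Prop) (f : 'I_t -> A -> X -> R)
    (pi : X -> R) (eps : R)
    (CR : n.-tuple A -> n.-tuple X -> R -> (('I_t -> R) -> Prop)) : Prop :=
  forall dev, is_device Q dev ->
    Prob dev pi (fun av xv => CR av xv eps (favg f dev av xv)) >= 1 - eps.

Definition nu (Xr : pred X) (xv : n.-tuple X) : nat := count (predC Xr) xv.

End Bell.

(* Main.v *)
Require Import Defs.
From mathcomp Require Import all_boot.
From HB Require Import structures.
From Stdlib Require Import Reals Lra Lia FunctionalExtensionality.
Local Open Scope R_scope.

Lemma Rplus_assoc' : associative Rplus. Proof. move=> x y z; ring. Qed.
HB.instance Definition _ := Monoid.isComLaw.Build R 0 Rplus Rplus_assoc' Rplus_comm Rplus_0_l.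

Lemma sumR_ext (T : finType) (F G : T -> R) : (forall a, F a = G a) -> sumR F = sumR G.
Proof. move=> h; rewrite /sumR; apply: eq_bigr => i _; exact: h. Qed.

Lemma sumR_lin (T : finType) (F G : T -> R) c1 c2 :
  sumR (fun a => c1 * F a + c2 * G a) = c1 * sumR F + c2 * sumR G.
Proof.
rewrite /sumR; elim/big_rec3: _ => [|i y1 y2 y3 _ ->]; first lra. lra.
Qed.

Lemma sumR_0 (T : finType) : sumR (fun _ : T => 0) = 0.
Proof. rewrite /sumR; elim/big_rec: _ => [|i y _ ->]; lra. Qed.

Fixpoint sr (k : nat) (F : nat -> R) : R :=
  match k with 0 => 0 | S k => sr k F + F k end.

Lemma sumR_ord (n : nat) (F : nat -> R) :
  sumR (fun j : 'I_n => F (nat_of_ord j)) = sr n F.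
Proof.
rewrite /sumR; elim: n => [|n IH]; first by rewrite big_ord0.
by rewrite big_ord_recr /= IH.
Qed.

Section S.
Variables (A X : finType) (t : nat) (f : 'I_t -> A -> X -> R).

Lemma fvec_lin (p q : behavior A X) c1 c2 i :
  fvec f (fun a x => c1 * p a x + c2 * q a x) i = c1 * fvec f p i + c2 * fvec f q i.
Proof.
rewrite /fvec -sumR_lin; apply: sumR_ext => a.
rewrite -sumR_lin; apply: sumR_ext => x; ring.
Qed.

Lemma fvec_0 i : fvec f (fun _ _ => 0) i = 0.
Proof.
rewrite /fvec; rewrite (@sumR_ext A _ (fun _ => 0)) ?sumR_0 // => a.
rewrite (@sumR_ext X _ (fun _ => 0)) ?sumR_0 // => x; ring.
Qed.

Variable g : nat -> behavior A X.
Fixpoint sb (k : nat) : behavior A X :=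
  match k with 0 => fun _ _ => 0 | S k => fun a x => sb k a x + g k a x end.

Lemma fvec_sb k i : fvec f (sb k) i = sr k (fun j => fvec f (g j) i).
Proof.
elim: k => [|k IH] /=; first exact: fvec_0.
rewrite -IH.
have -> : (fun a x => sb k a x + g k a x) = (fun a x => 1 * sb k a x + 1 * g k a x).
  apply: functional_extensionality => a; apply: functional_extensionality => x; ring.
rewrite fvec_lin; ring.
Qed.

Variables (Q : behavior A X -> Prop) (H : ('I_t -> R) -> R).
Hypothesis HQconv : convex_set Q.
Hypothesis Hconv : forall q p1 p2, 0 <= q <= 1 -> Q p1 -> Q p2 ->
     H (fun i => q * fvec f p1 i + (1 - q) * fvec f p2 i)
       <= q * H (fvec f p1) + (1 - q) * H (fvec f p2).
Hypothesis Hg : forall j, Q (g j).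

Definition avg k : behavior A X := fun a x => / INR k * sb k a x.

Lemma jensen k : (0 < k)%nat ->
  Q (avg k) /\ INR k * H (fvec f (avg k)) <= sr k (fun j => H (fvec f (g j))).
Proof.
elim: k => [//|k IH] _.
case: k IH => [|k] IH.
  have -> : avg 1 = g 0.
    apply: functional_extensionality => a; apply: functional_extensionality => x.
    rewrite /avg /=; field.
  split; first exact: Hg. simpl; lra.
have [Qk Hk] := IH isT.
set q := / INR k.+2.
have Kpos : 0 < INR k.+1 by apply: lt_0_INR; lia.
have Kpos2 : 0 < INR k.+2 by apply: lt_0_INR; lia.
have q01 : 0 <= q <= 1.
  rewrite /q S_INR; split; first by apply: Rlt_le; apply: Rinv_0_lt_compat; lra.
  rewrite -Rinv_1; apply: Rinv_le_contravar; lra.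
have E : avg k.+2 = (fun a x => q * g k.+1 a x + (1 - q) * avg k.+1 a x).
  apply: functional_extensionality => a; apply: functional_extensionality => x.
  rewrite /avg /q. change (sb k.+2 a x) with (sb k.+1 a x + g k.+1 a x).
  rewrite [INR k.+2]S_INR; field; lra.
split; first by rewrite E; exact: (HQconv _ _ _ (Hg k.+1) Qk q01).
have Ef : fvec f (avg k.+2) = (fun i => q * fvec f (g k.+1) i + (1 - q) * fvec f (avg k.+1) i).
  apply: functional_extensionality => i; by rewrite E fvec_lin.
rewrite Ef.
have Hc := Hconv _ _ _ q01 (Hg k.+1) Qk.
change (sr k.+2 _) with (sr k.+1 (fun j => H (fvec f (g j))) + H (fvec f (g k.+1))).
have e1 : INR k.+2 * q = 1 by rewrite /q; field; lra.
have e2 : INR k.+2 * (1 - q) = INR k.+1 by rewrite /q [INR k.+2]S_INR; field; lra.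
apply: Rle_trans; first by apply: Rmult_le_compat_l; [lra | exact: Hc].
rewrite Rmult_plus_distr_l -!Rmult_assoc e1 e2; lra.
Qed.

End S.

Lemma mlog2_mul x y : 0 < x -> 0 < y -> mlog2 (x * y) = mlog2 x + mlog2 y.
Proof. move=> hx hy; rewrite /mlog2 ln_mult //; field.
have := ln_lt_2; have : ln 1 < ln 2 by apply: ln_increasing; lra. rewrite ln_1; lra. Qed.

Lemma mlog2_ge0 x : 0 < x -> x <= 1 -> 0 <= mlog2 x.
Proof.
move=> h1 h2; rewrite /mlog2.
have l2 : 0 < ln 2 by rewrite -ln_1; apply: ln_increasing; lra.
have : ln x <= ln 1 by case: h2 => h; [left; apply: ln_increasing | right; rewrite h].
rewrite ln_1 => h. have i2 : 0 < / ln 2 by apply: Rinv_0_lt_compat.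
rewrite /Rdiv; nra.
Qed.

Lemma le_sumR (T : finType) (F : T -> R) a : (forall b, 0 <= F b) -> F a <= sumR F.
Proof.
move=> h; rewrite /sumR (bigD1 a) //=.
suff : 0 <= \big[Rplus/0]_(i | i != a) F i by lra.
elim/big_rec: _ => [|i y _ hy]; first lra. have := h i; lra.
Qed.

Lemma INR_addn a b : INR (addn a b) = INR a + INR b.
Proof. exact: plus_INR. Qed.

Lemma count_sumR (X : finType) (n : nat) (Xr : pred X) (xv : n.-tuple X) eta :
  sumR (fun j : 'I_n => if Xr (tnth xv j) then 0 else eta) = INR (nu Xr xv) * eta.
Proof.
rewrite /nu -sum1_count big_tuple big_mkcond /sumR.
apply: esym; apply: (big_rec2 (fun y1 y2 => INR y1 * eta = y2)); first by rewrite /=; ring.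
move=> i y1 y2 _ <-.
rewrite INR_addn /=; case: (Xr (tnth xv i)) => /=; ring.
Qed.

Theorem lemma2 (A X : finType) (t n : nat)
  (Q : behavior A X -> Prop)
  (HQ : forall p, Q p -> is_behavior p)
  (HQconv : convex_set Q)
  (f : 'I_t -> A -> X -> R)
  (Xr : pred X) (HXr : exists x, Xr x)
  (H : ('I_t -> R) -> R) (HRB : RB Q f Xr H)
  (HV : (('I_t -> R) -> Prop) -> R) (HHV : HV_spec Q f H HV)
  (eta : R) (Heta : forall p, Q p -> H (fvec f p) <= eta)
  (pi : X -> R) (Hpi0 : forall x, 0 <= pi x) (Hpi1 : sumR pi = 1)
  (eps : R) (Heps : 0 < eps)
  (CR : n.-tuple A -> n.-tuple X -> R -> (('I_t -> R) -> Prop))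
  (HCR : confidence_region Q f pi eps CR) :
  forall dev : device A X, is_device Q dev ->
  forall (av : n.-tuple A) (xv : n.-tuple X),
    CR av xv eps (favg f dev av xv) ->
    0 < Pcond dev av xv ->
    mlog2 (Pcond dev av xv) >= INR n * HV (CR av xv eps) - INR (nu Xr xv) * eta.
Proof.
move=> dev Hdev av xv Hcr Hpos.
pose g := fun j : nat => dev (take j av) (take j xv).
have Hg : forall j, Q (g j) by move=> j; exact: Hdev.
case: HRB => _ [HRB1 HRB2].
have Step1 : mlog2 (Pcond dev av xv) >=
   sumR (fun j : 'I_n => H (fvec f (g j)) - (if Xr (tnth xv j) then 0 else eta)).
  suff : 0 <= Pcond dev av xv /\ (0 < Pcond dev av xv -> mlog2 (Pcond dev av xv) >=
   sumR (fun j : 'I_n => H (fvec f (g j)) - (if Xr (tnth xv j) then 0 else eta))).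
    by case=> _ /(_ Hpos).
  rewrite /Pcond /prodR /sumR.
  apply: (big_rec2 (fun y1 y2 => 0 <= y1 /\ (0 < y1 -> mlog2 y1 >= y2))).
    split; first lra. move=> _; rewrite /mlog2 ln_1; apply: Rle_ge; lra.
  move=> i y1 y2 _ [y1p IHy].
  have [bnn bsum] := HQ _ (Hg i).
  set v := dev _ _ (tnth av i) (tnth xv i).
  have v0 : 0 <= v by apply: bnn.
  have v1 : v <= 1.
    rewrite -(bsum (tnth xv i)) /v; exact: (@le_sumR A (fun a => g i a (tnth xv i)) (tnth av i) (fun b => bnn _ _)).
  split; first by apply: Rmult_le_pos.
  move=> hp.
  have vp : 0 < v.
    case: v0 => // e; rewrite -e in hp; lra.
  have yp : 0 < y1.
    case: y1p => // e; rewrite -e in hp; lra.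
  rewrite mlog2_mul //.
  have := IHy yp => hy.
  suff : H (fvec f (g i)) - (if Xr (tnth xv i) then 0 else eta) <= mlog2 v by lra.
  case hx: (Xr (tnth xv i)).
    have := HRB1 _ (Hg i) (tnth av i) (tnth xv i) hx vp; rewrite /v /g; lra.
  have := @mlog2_ge0 v vp v1; have := Heta _ (Hg i); lra.
have E2 : sumR (fun j : 'I_n => H (fvec f (g j)) - (if Xr (tnth xv j) then 0 else eta))
   = sr n (fun j => H (fvec f (g j))) - INR (nu Xr xv) * eta.
  rewrite -count_sumR -(sumR_ord n (fun j => H (fvec f (g j)))).
  rewrite (@sumR_ext _ _ (fun j : 'I_n => 1 * H (fvec f (g j)) +
     (-1) * (if Xr (tnth xv j) then 0 else eta))); last by move=> j; ring.
  have h : forall s, -1 * s = - s by move=> s; ring.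
  rewrite sumR_lin Rmult_1_l h; reflexivity.
rewrite E2 in Step1.
suff : INR n * HV (CR av xv eps) <= sr n (fun j => H (fvec f (g j))) by lra.
suff : forall k, k = n -> INR k * HV (CR av xv eps) <= sr k (fun j => H (fvec f (g j))).
  by move/(_ n erefl).
case=> [_|k ek]; first by rewrite /=; lra.
rewrite ek.
have npos : (0 < n)%nat by rewrite -ek.
have [Qa Ja] := @jensen A X t f g Q H HQconv HRB2 Hg n npos.
have Ef : fvec f (avg A X g n) = favg f dev av xv.
  apply: functional_extensionality => i.
  have -> : avg A X g n = (fun a x => / INR n * sb A X g n a x + 0 * sb A X g n a x).
    apply: functional_extensionality => a; apply: functional_extensionality => x.
    rewrite /avg; ring.
  rewrite fvec_lin fvec_sb /favg.
  rewrite (sumR_ord n (fun j => fvec f (g j) i)); ring.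
have HVle : HV (CR av xv eps) <= H (fvec f (avg A X g n)).
  case: HHV => HH _; apply: HH => //; by rewrite Ef.
have : 0 < INR n by apply: lt_0_INR; lia.
nra.
Qed.
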